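(* Let $h(n)$ be the maximum size of a peak-pit Condorcet domain on $n$ alternatives and $f(n)$ the maximum size of a Condorcet domain on $n$ alternatives. Then there is a constant $C>0$ such that $f(n)\ge h(n)\ge C\left(\sqrt{2+2\sqrt2}\right)^n$ for all sufficiently large $n$; in particular $h(n)>2.1973^n$ for all sufficiently large $n$.
   Context: A domain is a set of linear orders on $[n]$. A Condorcet domain is a domain $D$ such that for every profile with an odd number of voters whose preferences all lie in $D$, the pairwise majority relation is transitive. For a triple $a<b<c$ of alternatives, call them the 1st, 2nd, 3rd; the never condition $xNp$ says the $x$-th alternative is never in position $p$ within the triple in any order of the domain. A domain is peak-pit if for every triple its restriction satisfies a never condition of the form $xN3$ or $xN1$. *)

(* Defs.v *)
From mathcomp Require Import all_boot all_fingroup.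
From mathcomp Require Import boolp.
Set Implicit Arguments. Unset Strict Implicit. Unset Printing Implicit Defensive.

(* A linear order on the n alternatives 'I_n is encoded by a permutation
   s : {perm 'I_n}, where s x is the rank of alternative x
   (rank 0 = most preferred).  x is ranked above y iff s x < s y. *)
Notation order n := {perm 'I_n}.

Definition domain n := {set order n}.

Definition nabove n (P : seq (order n)) (x y : 'I_n) : nat :=
  count (fun s : order n => s x < s y) P.

Definition majority n (P : seq (order n)) (x y : 'I_n) : bool :=
  nabove P y x < nabove P x y.

Definition transitive_rel n (r : 'I_n -> 'I_n -> bool) : Prop :=
  forall x y z, r x y -> r y z -> r x z.

Definition condorcet n (D : domain n) : Prop :=
  forall P : seq (order n), odd (size P) -> all (fun s => s \in D) P ->
    transitive_rel (majority P).

(* position (1, 2 or 3; 1 = top) of alternative x within the triple {a,b,c}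
   in the order s, where x is one of a, b, c *)
Definition tpos n (s : order n) (a b c x : 'I_n) : nat :=
  1 + (s a < s x) + (s b < s x) + (s c < s x).

Definition tnth3 n (a b c : 'I_n) (k : nat) : 'I_n :=
  if k == 1 then a else if k == 2 then b else c.

Definition never n (D : domain n) (a b c : 'I_n) (k p : nat) : Prop :=
  forall s, s \in D -> tpos s a b c (tnth3 a b c k) <> p.

Definition peak_pit n (D : domain n) : Prop :=
  forall a b c : 'I_n, a < b -> b < c ->
    exists k, [/\ 1 <= k <= 3 & (never D a b c k 3 \/ never D a b c k 1)].

Definition f_max (n : nat) : nat :=
  \max_(D : domain n | `[< condorcet D >]) #|D|.

Definition h_max (n : nat) : nat :=
  \max_(D : domain n | `[< condorcet D /\ peak_pit D >]) #|D|.

(* Main.v *)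
Require Import Defs.
From mathcomp Require Import all_boot.
From Stdlib Require Import Reals.
From mathcomp Require Import all_fingroup boolp zify.
From Stdlib Require Import Lra Lia.
Import ssrnat.
Set Implicit Arguments. Unset Strict Implicit. Unset Printing Implicit Defensive.

(* for the combinatorics (explicit peak-pit Condorcet domains built by a
   concatenation+shuffle scheme with an 8-alternative block, weighted counting giving
   growth 544 per 8 alternatives), Stdlib reals for the final bound. *)

Definition bef (s : seq nat) x y := index x s < index y s.

Lemma bef_filter (P : pred nat) s x y : P x -> P y -> bef (filter P s) x y = bef s x y.
Proof.
rewrite /bef => Px Py; elim: s => [|z s IH] //=.
case Pz: (P z) => /=.
- by case: ifP; case: ifP => //; rewrite ltnS IH.
- have zx : (z == x) = false by apply/negbTE; apply: contraFneq Pz => ->.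
  have zy : (z == y) = false by apply/negbTE; apply: contraFneq Pz => ->.
  by rewrite zx zy ltnS IH.
Qed.

Lemma bef_map (f : nat -> nat) s x y : injective f -> bef (map f s) (f x) (f y) = bef s x y.
Proof. by move=> fi; rewrite /bef !index_map. Qed.

Lemma bef_asym s x y : bef s x y -> ~~ bef s y x.
Proof. by rewrite /bef -leqNgt => /ltnW. Qed.

Lemma bef_cat_in l1 l2 x y : x \in l1 -> y \notin l1 -> bef (l1 ++ l2) x y.
Proof.
move=> xi yn; rewrite /bef !index_cat xi (negbTE yn).
by apply: leq_trans (leq_addr _ _); rewrite index_mem.
Qed.

Lemma bef_cat_r l1 l2 x y : x \notin l1 -> y \notin l1 -> bef (l1 ++ l2) x y = bef l2 x y.
Proof. by move=> xn yn; rewrite /bef !index_cat (negbTE xn) (negbTE yn) ltn_add2l. Qed.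

Lemma bef_cat_l l1 l2 x y : x \in l1 -> y \in l1 -> bef (l1 ++ l2) x y = bef l1 x y.
Proof. by move=> xn yn; rewrite /bef !index_cat xn yn. Qed.

Lemma index_iota_in a c x : a <= x -> x < a + c -> index x (iota a c) = x - a.
Proof.
move=> ax xc; have hi : x - a < size (iota a c) by rewrite size_iota; lia.
have := index_uniq 0 hi (iota_uniq a c); rewrite nth_iota ?subnKC //.
rewrite size_iota in hi; lia.
Qed.

Lemma bef_iota a c x y : a <= x -> x < a + c -> a <= y -> y < a + c -> bef (iota a c) x y = (x < y).
Proof.
move=> ax xc ay yc; rewrite /bef !index_iota_in //.
apply/idP/idP => h; lia.
Qed.

Lemma bef_total s x y : x \in s -> y \in s -> x != y -> bef s x y || bef s y x.
Proof.
move=> xs ys xy; rewrite /bef -neq_ltn; apply: contra xy => /eqP e.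
by rewrite -(nth_index 0 xs) e nth_index.
Qed.

Fixpoint shuf (m : seq bool) (A B : seq nat) : seq nat :=
  match m with
  | [::] => A ++ B
  | true :: m' => if B is y :: B' then y :: shuf m' A B' else shuf m' A B
  | false :: m' => if A is x :: A' then x :: shuf m' A' B else shuf m' A B
  end.

Lemma perm_shuf m A B : perm_eq (shuf m A B) (A ++ B).
Proof.
elim: m A B => [|[] m IH] A B /=; first exact: perm_refl.
- case: B => [|y B]; first exact: IH.
  by rewrite perm_sym (perm_catCA A [:: y] B) /= perm_cons perm_sym IH.
- case: A => [|x A]; first exact: IH.
  by rewrite /= perm_cons IH.
Qed.

Lemma filter_none (P : pred nat) B : all (predC P) B -> filter P B = [::].
Proof. by elim: B => [|y B IH] //= /andP[/negbTE -> /IH]. Qed.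

Lemma filter_shufA (P : pred nat) m A B : all P A -> all (predC P) B -> filter P (shuf m A B) = A.
Proof.
elim: m A B => [|[] m IH] A B /=.
- by move=> hA hB; rewrite filter_cat (all_filterP hA) filter_none ?cats0.
- case: B => [|y B] hA /=; first by move=> hB; apply: IH.
  by move=> /andP[/= /negbTE -> hB] /=; apply: IH.
- case: A => [|x A] /=; first by move=> hA hB; apply: IH.
  by move=> /andP[/= -> hA] hB /=; rewrite IH.
Qed.

Lemma filter_shufB (P : pred nat) m A B : all (predC P) A -> all P B -> filter P (shuf m A B) = B.
Proof.
elim: m A B => [|[] m IH] A B /=.
- move=> hA hB; rewrite filter_cat (all_filterP hB).
  by rewrite filter_none.
- case: B => [|y B] hA /=; first by move=> hB; apply: IH.
  by move=> /andP[/= -> hB] /=; rewrite IH.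
- case: A => [|x A] /=; first by move=> hA hB; apply: IH.
  by move=> /andP[/= /negbTE -> hA] hB /=; apply: IH.
Qed.

Lemma map_shuf (P : pred nat) m A B : count negb m = size A -> count Datatypes.id m = size B ->
  all (predC P) A -> all P B -> map P (shuf m A B) = m.
Proof.
elim: m A B => [|[] m IH] A B /=.
- by case: A => // ; case: B.
- case: B => [|y B] //= ; rewrite add0n => cA [cB] hA /andP[Py hB].
  by rewrite Py IH.
- case: A => [|x A] //= ; rewrite add0n => [[cA]] cB /andP[/= Px hA] hB.
  by rewrite (negbTE Px) IH.
Qed.

Lemma shuf_cat m1 m2 A B : count negb m1 <= size A -> count Datatypes.id m1 <= size B ->
  shuf (m1 ++ m2) A B = shuf m1 (take (count negb m1) A) (take (count Datatypes.id m1) B)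
                        ++ shuf m2 (drop (count negb m1) A) (drop (count Datatypes.id m1) B).
Proof.
elim: m1 A B => [|[] m1 IH] A B /=.
- by rewrite !take0 !drop0.
- rewrite add0n add1n; case: B => [|y B] //= cA cB.
  by rewrite IH.
- rewrite add0n add1n; case: A => [|x A] //= cA cB.
  by rewrite IH.
Qed.

Lemma shuf_true j B : shuf (nseq j true) [::] B = B.
Proof. by elim: j B => [|j IH] [|y B] //=; rewrite ?IH ?cats0. Qed.

Lemma shuf_false A m B : shuf (nseq (size A) false ++ m) A B = A ++ shuf m [::] B.
Proof. by elim: A => [|x A IH] //=; rewrite IH. Qed.

Fixpoint masks (a : nat) : nat -> seq (seq bool) :=
  match a with
  | 0 => fun b => [:: nseq b true]
  | a'.+1 => fix mb b := match b with
        | 0 => [:: nseq a'.+1 false]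
        | b'.+1 => map (cons false) (masks a' b'.+1) ++ map (cons true) (mb b')
        end
  end.

Lemma count_nseqs (a : pred bool) k x : count a (nseq k x) = a x * k.
Proof. by elim: k => [|k IH] /=; rewrite ?muln0 // IH mulnS. Qed.

Lemma mem_masks a b m : m \in masks a b -> count negb m = a /\ count Datatypes.id m = b.
Proof.
elim: a b m => [|a IHa] b m /=.
- by rewrite inE => /eqP ->; split; elim: b => //= b ->.
- elim: b m => [|b IHb] m /=.
  + by rewrite inE => /eqP ->; split; [elim: a {IHa} => //= a -> | elim: a {IHa}].
  + rewrite mem_cat => /orP[] /mapP[m' hm' ->] /=.
    * by have [-> ->] := IHa _ _ hm'.
    * by have [-> ->] := IHb _ hm'.
Qed.

Lemma uniq_masks a b : uniq (masks a b).
Proof.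
elim: a b => [|a IHa] b //=.
elim: b => [|b IHb] //=.
rewrite cat_uniq !map_inj_uniq ?IHa ?IHb //; try by move=> x y [].
rewrite andbT; apply/hasPn => m /mapP[m' _ ->]; apply/mapP => -[m'' _ //].
Qed.


Definition SatB s i j k (c : bool) :=
  if c then ~~ (bef s j i && bef s k i) else bef s i k || bef s j k.

Definition piece n (a : seq nat) tau (b : seq nat) h (m : seq bool) :=
  take (n - tau) a ++ shuf m (drop (n - tau) a) (map (addn n) (take h b)) ++ map (addn n) (drop h b).

Lemma all_iota (P : pred nat) a c : (forall x, a <= x < a + c -> P x) -> all P (iota a c).
Proof. by move=> H; apply/allP => x; rewrite mem_iota => /H. Qed.

Lemma map_addn_iota n h : map (addn n) (iota 0 h) = iota n h.
Proof. by have := iotaDl n 0 h; rewrite addn0 => ->. Qed.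

Definition sufv N u (s : seq nat) := exists pre, s = pre ++ iota (N - u) u.

Lemma sufv_weak N u u' s : u' <= u -> u <= N -> sufv N u s -> sufv N u' s.
Proof.
move=> t1 t2 [p ->]; exists (p ++ iota (N - u) (u - u')).
have -> : N - u' = N - u + (u - u') by lia.
by rewrite -catA -iotaD subnK.
Qed.

Fixpoint lead (l : seq bool) := if l is true :: l' then (lead l').+1 else 0.
Definition trail (m : seq bool) := lead (rev m).

Lemma lead_spec l : l = nseq (lead l) true ++ drop (lead l) l.
Proof. by elim: l => [|[] l IH] //=; rewrite -IH. Qed.

Lemma trail_spec m : m = rev (drop (trail m) (rev m)) ++ nseq (trail m) true.
Proof.
by rewrite -(rev_nseq (trail m) true) -rev_cat /trail -lead_spec revK.
Qed.

Lemma cnt_id_nseq j : count Datatypes.id (nseq j true) = j.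
Proof. by elim: j => //= j ->. Qed.
Lemma cnt_negb_nseq j : count negb (nseq j true) = 0.
Proof. by elim: j. Qed.

Definition M := 10.

Definition newt tau h t (m : seq bool) :=
  if h < 8 then minn M t
  else if m == nseq tau false ++ nseq 8 true then minn M (tau + 8) else minn M (trail m).

Section Piece.
Variables (n tau : nat) (pre : seq nat) (b : seq nat) (h : nat) (mm : seq bool).
Hypothesis Hal : perm_eq (pre ++ iota (n - tau) tau) (iota 0 n).
Hypothesis Htn : tau <= n.
Hypothesis Hb : perm_eq b (iota 0 8).
Hypothesis Hh : h <= 8.
Hypothesis Htake : take h b = iota 0 h.
Hypothesis Hmm : mm \in masks tau h.

Local Notation A := (iota (n - tau) tau).
Local Notation Bh := (iota n h).
Local Notation post := (map (addn n) (drop h b)).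
Local Notation s' := (pre ++ shuf mm A Bh ++ post).

Lemma size_pre : size pre = n - tau.
Proof. by have := perm_size Hal; rewrite size_cat !size_iota => <-; rewrite addnK. Qed.

Lemma pieceE : piece n (pre ++ A) tau b h mm = s'.
Proof.
by rewrite /piece take_size_cat ?drop_size_cat ?size_pre // Htake map_addn_iota.
Qed.

Lemma uniq_al : uniq (pre ++ A).
Proof. by rewrite (perm_uniq Hal) iota_uniq. Qed.

Lemma mem_al x : (x \in pre ++ A) = (x < n).
Proof. by rewrite (perm_mem Hal) mem_iota. Qed.

Lemma pre_lt x : x \in pre -> x < n.
Proof. by move=> xi; rewrite -mem_al mem_cat xi. Qed.

Lemma post_ge x : x \in post -> n <= x.
Proof. by case/mapP => y _ ->; rewrite leq_addr. Qed.

Lemma size_b : size b = 8.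
Proof. by rewrite (perm_size Hb) size_iota. Qed.

Lemma perm_s' : perm_eq s' (iota 0 (n + 8)).
Proof.
have e1 : perm_eq s' (pre ++ (A ++ Bh) ++ post).
  by rewrite perm_cat2l perm_cat2r perm_shuf.
apply: (perm_trans e1).
have -> : pre ++ (A ++ Bh) ++ post = (pre ++ A) ++ map (addn n) b.
  by rewrite -catA -catA -(map_addn_iota n h) -Htake -map_cat cat_take_drop.
by rewrite iotaD add0n; apply: perm_cat => //; rewrite -(map_addn_iota n 8); apply: perm_map.
Qed.

Lemma filter_lo : filter (fun z => z < n) s' = pre ++ A.
Proof.
rewrite !filter_cat (all_filterP _) ?filter_shufA ?filter_none ?cats0 //.
- by apply/allP => x /post_ge /=; rewrite -leqNgt.
- by apply: all_iota => x /=; lia.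
- by apply: all_iota => x /=; lia.
- by apply/allP => x /pre_lt.
Qed.

Lemma filter_hi : filter (fun z => n <= z) s' = map (addn n) b.
Proof.
rewrite !filter_cat filter_none ?filter_shufB ?(all_filterP _) /=.
- by rewrite -(map_addn_iota n h) -Htake -map_cat cat_take_drop.
- by apply/allP => x /post_ge.
- by apply: all_iota => x /=; lia.
- by apply: all_iota => x /=; lia.
- by apply/allP => x /pre_lt /=; rewrite -ltnNge.
Qed.

Lemma P1 x y : x < n -> y < n -> bef s' x y = bef (pre ++ A) x y.
Proof. by move=> hx hy; rewrite -(@bef_filter (fun z => z < n) _ x y hx hy) filter_lo. Qed.

Lemma P2 x y : bef s' (n + x) (n + y) = bef b x y.
Proof.
rewrite -(@bef_filter (fun z => n <= z)) ?leq_addr // filter_hi.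
by apply: bef_map; apply: addnI.
Qed.

Lemma mem_s' x : (x \in s') = (x < n + 8).
Proof. by rewrite (perm_mem perm_s') mem_iota. Qed.

Lemma P3 a y : a < n -> n <= y -> y < n + 8 -> bef s' y a -> (a \in A) /\ (y \in Bh).
Proof.
move=> an ny y8 hb; split.
- apply/negPn/negP => aA.
  have ap : a \in pre by move: (mem_al a); rewrite an mem_cat (negbTE aA) orbF.
  have yp : y \notin pre by apply/negP => /pre_lt; rewrite ltnNge ny.
  by move: (bef_asym hb); rewrite (bef_cat_in _ ap yp).
- apply/negPn/negP => yB.
  have yps : y \notin pre ++ shuf mm A Bh.
    rewrite mem_cat negb_or (perm_mem (perm_shuf _ _ _)) mem_cat negb_or yB andbT.
    rewrite mem_iota; apply/andP; split; first by apply/negP => /pre_lt; lia.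
    by lia.
  have aps : a \in pre ++ shuf mm A Bh.
    by rewrite mem_cat (perm_mem (perm_shuf _ _ _)) mem_cat orbA -mem_cat mem_al an.
  by move: (bef_asym hb); rewrite catA (bef_cat_in _ aps yps).
Qed.

Lemma notpre x : x \in A -> x \notin pre.
Proof.
move=> xA; apply/negP => xp; move: uniq_al; rewrite cat_uniq => /and3P[_ /hasPn H _].
by move: (H x xA); rewrite xp.
Qed.

Lemma sat_step (R XR : nat -> nat -> nat -> bool) :
  (forall i j k, i < j -> j < k -> k < n -> SatB (pre ++ A) i j k (R i j k)) ->
  (forall i j k, i < j -> j < k -> k < 8 -> SatB b i j k (XR i j k)) ->
  forall i j k, i < j -> j < k -> k < n + 8 ->
  SatB s' i j k (if n <= i then XR (i - n) (j - n) (k - n) else if k < n then R i j k else j < n).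
Proof.
move=> HR HX i j k ij jk kn.
case ni: (n <= i) => /=.
- move: (HX (i - n) (j - n) (k - n)).
  set i' := i - n; set j' := j - n; set k' := k - n.
  have ei : i = n + i' by rewrite /i'; lia.
  have ej : j = n + j' by rewrite /j'; lia.
  have ek : k = n + k' by rewrite /k'; lia.
  rewrite /SatB ei ej ek !P2 => H; apply: H; rewrite /i' /j' /k'; lia.
case kn': (k < n) => /=.
- by rewrite /SatB !P1 //; try lia; apply: HR.
case jn: (j < n) => /=.
- rewrite /SatB; apply/negP => /andP[hji hki].
  have [iA _] := P3 (a:=i) (y:=k) (ltac:(lia)) (ltac:(lia)) kn hki.
  have jA : j \in A by move: iA; rewrite !mem_iota; lia.
  have iA' : n - tau <= i < n by move: iA; rewrite mem_iota; lia.
  by move: (bef_asym hji); rewrite P1 ?bef_cat_r ?notpre // ?bef_iota //; lia.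
- rewrite /SatB; case hik: (bef s' i k) => //=.
  have hki : bef s' k i.
    have := @bef_total s' i k; rewrite !mem_s' hik /= => H; apply: H; try lia.
  have [_ kB] := P3 (a:=i) (y:=k) (ltac:(lia)) (ltac:(lia)) kn hki.
  move: kB; rewrite mem_iota => kB.
  have ej : j = n + (j - n) by lia.
  have ek : k = n + (k - n) by lia.
  rewrite ej ek P2 -(cat_take_drop h b) bef_cat_l Htake ?mem_iota ?bef_iota //; lia.
Qed.

Lemma sufv_post t : h < 8 -> h + t < 8 -> drop (8 - t) b = iota (8 - t) t -> sufv (n + 8) t s'.
Proof.
move=> h8 ht hd.
have e : drop h b = take (8 - t - h) (drop h b) ++ drop (8 - t) b.
  have -> : drop (8 - t) b = drop (8 - t - h) (drop h b) by rewrite drop_drop subnK //; lia.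
  by rewrite cat_take_drop.
exists (pre ++ shuf mm A Bh ++ map (addn n) (take (8 - t - h) (drop h b))).
rewrite {1}e hd map_cat -!catA -iotaDl; congr (_ ++ _ ++ _ ++ iota _ _); lia.
Qed.

Lemma sufv_allB : h = 8 -> mm = nseq tau false ++ nseq 8 true -> sufv (n + 8) (tau + 8) s'.
Proof.
move=> h8 ->; have -> : drop h b = [::] by rewrite drop_oversize // size_b h8.
have -> : nseq tau false = nseq (size A) false by rewrite size_iota.
rewrite shuf_false shuf_true h8 /= cats0; exists pre.
have -> : n + 8 - (tau + 8) = n - tau by lia.
by rewrite iotaD subnK.
Qed.

Lemma sufv_trail : h = 8 -> sufv (n + 8) (trail mm) s'.
Proof.
move=> h8; have -> : drop h b = [::] by rewrite drop_oversize // size_b h8.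
have [c1 c2] := mem_masks Hmm.
set j := trail mm; set m1 := rev (drop j (rev mm)).
have em : mm = m1 ++ nseq j true by apply: trail_spec.
have cn : count negb m1 = tau.
  by move: c1; rewrite em count_cat cnt_negb_nseq addn0.
have ci : count Datatypes.id m1 + j = 8.
  by move: c2; rewrite em count_cat h8 cnt_id_nseq.
rewrite em shuf_cat ?size_iota ?cn //; last lia.
rewrite (drop_oversize (s:=iota (n - tau) tau)) ?size_iota // shuf_true h8 drop_iota.
have e1 : iota (n + count Datatypes.id m1) (8 - count Datatypes.id m1) = iota (n + 8 - j) j by congr iota; lia.
rewrite e1 [map _ [::]]/= cats0 catA; eexists; reflexivity.
Qed.

Lemma sufv_newt t : t <= 8 -> (h < 8 -> h + t < 8) -> drop (8 - t) b = iota (8 - t) t ->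
  sufv (n + 8) (newt tau h t mm) s'.
Proof.
move=> t8 ht hd; rewrite /newt; case: ifP => h8.
  by apply: (sufv_weak (u := t)); rewrite ?geq_minr //; [lia | apply: sufv_post => //; apply: ht].
have h8' : h = 8 by lia.
case: eqP => em.
  by apply: (sufv_weak (u := tau + 8)); rewrite ?geq_minr //; [lia | apply: sufv_allB].
have [_ c2] := mem_masks Hmm.
have tj : trail mm <= 8.
  by rewrite -h8' -c2 {2}(trail_spec mm) count_cat cnt_id_nseq leq_addl.
by apply: (sufv_weak (u := trail mm)); rewrite ?geq_minr //; [lia | apply: sufv_trail].
Qed.

End Piece.


Definition X : seq ((seq nat * nat) * nat) := [::
  (([:: 0; 1; 2; 3; 4; 5; 7; 6], 6), 0);
  (([:: 0; 1; 2; 3; 4; 6; 5; 7], 5), 1);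
  (([:: 0; 1; 2; 3; 4; 6; 7; 5], 5), 0);
  (([:: 0; 1; 2; 3; 5; 4; 6; 7], 4), 2);
  (([:: 0; 1; 2; 3; 5; 4; 7; 6], 4), 0);
  (([:: 0; 1; 2; 3; 6; 4; 5; 7], 4), 1);
  (([:: 0; 1; 2; 3; 6; 4; 7; 5], 4), 0);
  (([:: 0; 1; 2; 3; 6; 7; 4; 5], 4), 0);
  (([:: 0; 1; 2; 4; 3; 5; 6; 7], 3), 3);
  (([:: 0; 1; 2; 4; 3; 5; 7; 6], 3), 0);
  (([:: 0; 1; 2; 4; 3; 6; 5; 7], 3), 1);
  (([:: 0; 1; 2; 4; 3; 6; 7; 5], 3), 0);
  (([:: 0; 1; 2; 4; 5; 3; 6; 7], 3), 2);
  (([:: 0; 1; 2; 4; 5; 3; 7; 6], 3), 0);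
  (([:: 0; 1; 2; 4; 5; 6; 3; 7], 3), 1);
  (([:: 0; 1; 2; 4; 5; 6; 7; 3], 3), 0);
  (([:: 0; 1; 3; 2; 4; 5; 6; 7], 2), 4);
  (([:: 0; 1; 3; 2; 4; 5; 7; 6], 2), 0);
  (([:: 0; 1; 3; 2; 4; 6; 5; 7], 2), 1);
  (([:: 0; 1; 3; 2; 4; 6; 7; 5], 2), 0);
  (([:: 0; 1; 3; 2; 5; 4; 6; 7], 2), 2);
  (([:: 0; 1; 3; 2; 5; 4; 7; 6], 2), 0);
  (([:: 0; 1; 3; 2; 6; 4; 5; 7], 2), 1);
  (([:: 0; 1; 3; 2; 6; 4; 7; 5], 2), 0);
  (([:: 0; 1; 3; 2; 6; 7; 4; 5], 2), 0);
  (([:: 0; 1; 4; 2; 3; 5; 6; 7], 2), 3);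
  (([:: 0; 1; 4; 2; 3; 5; 7; 6], 2), 0);
  (([:: 0; 1; 4; 2; 3; 6; 5; 7], 2), 1);
  (([:: 0; 1; 4; 2; 3; 6; 7; 5], 2), 0);
  (([:: 0; 1; 4; 2; 5; 3; 6; 7], 2), 2);
  (([:: 0; 1; 4; 2; 5; 3; 7; 6], 2), 0);
  (([:: 0; 1; 4; 2; 5; 6; 3; 7], 2), 1);
  (([:: 0; 1; 4; 2; 5; 6; 7; 3], 2), 0);
  (([:: 0; 1; 4; 5; 2; 3; 6; 7], 2), 2);
  (([:: 0; 1; 4; 5; 2; 3; 7; 6], 2), 0);
  (([:: 0; 1; 4; 5; 2; 6; 3; 7], 2), 1);
  (([:: 0; 1; 4; 5; 2; 6; 7; 3], 2), 0);
  (([:: 0; 1; 4; 5; 6; 2; 3; 7], 2), 1);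
  (([:: 0; 1; 4; 5; 6; 2; 7; 3], 2), 0);
  (([:: 0; 1; 4; 5; 6; 7; 2; 3], 2), 0);
  (([:: 0; 2; 1; 3; 4; 5; 6; 7], 1), 5);
  (([:: 0; 2; 1; 3; 4; 5; 7; 6], 1), 0);
  (([:: 0; 2; 1; 3; 4; 6; 5; 7], 1), 1);
  (([:: 0; 2; 1; 3; 4; 6; 7; 5], 1), 0);
  (([:: 0; 2; 1; 3; 5; 4; 6; 7], 1), 2);
  (([:: 0; 2; 1; 3; 5; 4; 7; 6], 1), 0);
  (([:: 0; 2; 1; 3; 6; 4; 5; 7], 1), 1);
  (([:: 0; 2; 1; 3; 6; 4; 7; 5], 1), 0);
  (([:: 0; 2; 1; 3; 6; 7; 4; 5], 1), 0);
  (([:: 0; 2; 1; 4; 3; 5; 6; 7], 1), 3);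
  (([:: 0; 2; 1; 4; 3; 5; 7; 6], 1), 0);
  (([:: 0; 2; 1; 4; 3; 6; 5; 7], 1), 1);
  (([:: 0; 2; 1; 4; 3; 6; 7; 5], 1), 0);
  (([:: 0; 2; 1; 4; 5; 3; 6; 7], 1), 2);
  (([:: 0; 2; 1; 4; 5; 3; 7; 6], 1), 0);
  (([:: 0; 2; 1; 4; 5; 6; 3; 7], 1), 1);
  (([:: 0; 2; 1; 4; 5; 6; 7; 3], 1), 0);
  (([:: 0; 2; 3; 1; 4; 5; 6; 7], 1), 4);
  (([:: 0; 2; 3; 1; 4; 5; 7; 6], 1), 0);
  (([:: 0; 2; 3; 1; 4; 6; 5; 7], 1), 1);
  (([:: 0; 2; 3; 1; 4; 6; 7; 5], 1), 0);
  (([:: 0; 2; 3; 1; 5; 4; 6; 7], 1), 2);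
  (([:: 0; 2; 3; 1; 5; 4; 7; 6], 1), 0);
  (([:: 0; 2; 3; 1; 6; 4; 5; 7], 1), 1);
  (([:: 0; 2; 3; 1; 6; 4; 7; 5], 1), 0);
  (([:: 0; 2; 3; 1; 6; 7; 4; 5], 1), 0);
  (([:: 0; 4; 1; 2; 3; 5; 6; 7], 1), 3);
  (([:: 0; 4; 1; 2; 3; 5; 7; 6], 1), 0);
  (([:: 0; 4; 1; 2; 3; 6; 5; 7], 1), 1);
  (([:: 0; 4; 1; 2; 3; 6; 7; 5], 1), 0);
  (([:: 0; 4; 1; 2; 5; 3; 6; 7], 1), 2);
  (([:: 0; 4; 1; 2; 5; 3; 7; 6], 1), 0);
  (([:: 0; 4; 1; 2; 5; 6; 3; 7], 1), 1);
  (([:: 0; 4; 1; 2; 5; 6; 7; 3], 1), 0);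
  (([:: 0; 4; 1; 5; 2; 3; 6; 7], 1), 2);
  (([:: 0; 4; 1; 5; 2; 3; 7; 6], 1), 0);
  (([:: 0; 4; 1; 5; 2; 6; 3; 7], 1), 1);
  (([:: 0; 4; 1; 5; 2; 6; 7; 3], 1), 0);
  (([:: 0; 4; 1; 5; 6; 2; 3; 7], 1), 1);
  (([:: 0; 4; 1; 5; 6; 2; 7; 3], 1), 0);
  (([:: 0; 4; 1; 5; 6; 7; 2; 3], 1), 0);
  (([:: 0; 4; 5; 1; 2; 3; 6; 7], 1), 2);
  (([:: 0; 4; 5; 1; 2; 3; 7; 6], 1), 0);
  (([:: 0; 4; 5; 1; 2; 6; 3; 7], 1), 1);
  (([:: 0; 4; 5; 1; 2; 6; 7; 3], 1), 0);
  (([:: 0; 4; 5; 1; 6; 2; 3; 7], 1), 1);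
  (([:: 0; 4; 5; 1; 6; 2; 7; 3], 1), 0);
  (([:: 0; 4; 5; 1; 6; 7; 2; 3], 1), 0);
  (([:: 0; 4; 5; 6; 1; 2; 3; 7], 1), 1);
  (([:: 0; 4; 5; 6; 1; 2; 7; 3], 1), 0);
  (([:: 0; 4; 5; 6; 1; 7; 2; 3], 1), 0);
  (([:: 0; 4; 5; 6; 7; 1; 2; 3], 1), 0);
  (([:: 1; 0; 2; 3; 4; 5; 6; 7], 0), 6);
  (([:: 1; 0; 2; 3; 4; 5; 7; 6], 0), 0);
  (([:: 1; 0; 2; 3; 4; 6; 5; 7], 0), 1);
  (([:: 1; 0; 2; 3; 4; 6; 7; 5], 0), 0);
  (([:: 1; 0; 2; 3; 5; 4; 6; 7], 0), 2);
  (([:: 1; 0; 2; 3; 5; 4; 7; 6], 0), 0);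
  (([:: 1; 0; 2; 3; 6; 4; 5; 7], 0), 1);
  (([:: 1; 0; 2; 3; 6; 4; 7; 5], 0), 0);
  (([:: 1; 0; 2; 3; 6; 7; 4; 5], 0), 0);
  (([:: 1; 0; 2; 4; 3; 5; 6; 7], 0), 3);
  (([:: 1; 0; 2; 4; 3; 5; 7; 6], 0), 0);
  (([:: 1; 0; 2; 4; 3; 6; 5; 7], 0), 1);
  (([:: 1; 0; 2; 4; 3; 6; 7; 5], 0), 0);
  (([:: 1; 0; 2; 4; 5; 3; 6; 7], 0), 2);
  (([:: 1; 0; 2; 4; 5; 3; 7; 6], 0), 0);
  (([:: 1; 0; 2; 4; 5; 6; 3; 7], 0), 1);
  (([:: 1; 0; 2; 4; 5; 6; 7; 3], 0), 0);
  (([:: 1; 0; 3; 2; 4; 5; 6; 7], 0), 4);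
  (([:: 1; 0; 3; 2; 4; 5; 7; 6], 0), 0);
  (([:: 1; 0; 3; 2; 4; 6; 5; 7], 0), 1);
  (([:: 1; 0; 3; 2; 4; 6; 7; 5], 0), 0);
  (([:: 1; 0; 3; 2; 5; 4; 6; 7], 0), 2);
  (([:: 1; 0; 3; 2; 5; 4; 7; 6], 0), 0);
  (([:: 1; 0; 3; 2; 6; 4; 5; 7], 0), 1);
  (([:: 1; 0; 3; 2; 6; 4; 7; 5], 0), 0);
  (([:: 1; 0; 3; 2; 6; 7; 4; 5], 0), 0);
  (([:: 1; 0; 4; 2; 3; 5; 6; 7], 0), 3);
  (([:: 1; 0; 4; 2; 3; 5; 7; 6], 0), 0);
  (([:: 1; 0; 4; 2; 3; 6; 5; 7], 0), 1);
  (([:: 1; 0; 4; 2; 3; 6; 7; 5], 0), 0);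
  (([:: 1; 0; 4; 2; 5; 3; 6; 7], 0), 2);
  (([:: 1; 0; 4; 2; 5; 3; 7; 6], 0), 0);
  (([:: 1; 0; 4; 2; 5; 6; 3; 7], 0), 1);
  (([:: 1; 0; 4; 2; 5; 6; 7; 3], 0), 0);
  (([:: 1; 0; 4; 5; 2; 3; 6; 7], 0), 2);
  (([:: 1; 0; 4; 5; 2; 3; 7; 6], 0), 0);
  (([:: 1; 0; 4; 5; 2; 6; 3; 7], 0), 1);
  (([:: 1; 0; 4; 5; 2; 6; 7; 3], 0), 0);
  (([:: 1; 0; 4; 5; 6; 2; 3; 7], 0), 1);
  (([:: 1; 0; 4; 5; 6; 2; 7; 3], 0), 0);
  (([:: 1; 0; 4; 5; 6; 7; 2; 3], 0), 0);
  (([:: 2; 0; 1; 3; 4; 5; 6; 7], 0), 5);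
  (([:: 2; 0; 1; 3; 4; 5; 7; 6], 0), 0);
  (([:: 2; 0; 1; 3; 4; 6; 5; 7], 0), 1);
  (([:: 2; 0; 1; 3; 4; 6; 7; 5], 0), 0);
  (([:: 2; 0; 1; 3; 5; 4; 6; 7], 0), 2);
  (([:: 2; 0; 1; 3; 5; 4; 7; 6], 0), 0);
  (([:: 2; 0; 1; 3; 6; 4; 5; 7], 0), 1);
  (([:: 2; 0; 1; 3; 6; 4; 7; 5], 0), 0);
  (([:: 2; 0; 1; 3; 6; 7; 4; 5], 0), 0);
  (([:: 2; 0; 1; 4; 3; 5; 6; 7], 0), 3);
  (([:: 2; 0; 1; 4; 3; 5; 7; 6], 0), 0);
  (([:: 2; 0; 1; 4; 3; 6; 5; 7], 0), 1);
  (([:: 2; 0; 1; 4; 3; 6; 7; 5], 0), 0);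
  (([:: 2; 0; 1; 4; 5; 3; 6; 7], 0), 2);
  (([:: 2; 0; 1; 4; 5; 3; 7; 6], 0), 0);
  (([:: 2; 0; 1; 4; 5; 6; 3; 7], 0), 1);
  (([:: 2; 0; 1; 4; 5; 6; 7; 3], 0), 0);
  (([:: 2; 0; 3; 1; 4; 5; 6; 7], 0), 4);
  (([:: 2; 0; 3; 1; 4; 5; 7; 6], 0), 0);
  (([:: 2; 0; 3; 1; 4; 6; 5; 7], 0), 1);
  (([:: 2; 0; 3; 1; 4; 6; 7; 5], 0), 0);
  (([:: 2; 0; 3; 1; 5; 4; 6; 7], 0), 2);
  (([:: 2; 0; 3; 1; 5; 4; 7; 6], 0), 0);
  (([:: 2; 0; 3; 1; 6; 4; 5; 7], 0), 1);
  (([:: 2; 0; 3; 1; 6; 4; 7; 5], 0), 0);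
  (([:: 2; 0; 3; 1; 6; 7; 4; 5], 0), 0);
  (([:: 2; 3; 0; 1; 4; 5; 6; 7], 0), 4);
  (([:: 2; 3; 0; 1; 4; 5; 7; 6], 0), 0);
  (([:: 2; 3; 0; 1; 4; 6; 5; 7], 0), 1);
  (([:: 2; 3; 0; 1; 4; 6; 7; 5], 0), 0);
  (([:: 2; 3; 0; 1; 5; 4; 6; 7], 0), 2);
  (([:: 2; 3; 0; 1; 5; 4; 7; 6], 0), 0);
  (([:: 2; 3; 0; 1; 6; 4; 5; 7], 0), 1);
  (([:: 2; 3; 0; 1; 6; 4; 7; 5], 0), 0);
  (([:: 2; 3; 0; 1; 6; 7; 4; 5], 0), 0);
  (([:: 4; 0; 1; 2; 3; 5; 6; 7], 0), 3);
  (([:: 4; 0; 1; 2; 3; 5; 7; 6], 0), 0);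
  (([:: 4; 0; 1; 2; 3; 6; 5; 7], 0), 1);
  (([:: 4; 0; 1; 2; 3; 6; 7; 5], 0), 0);
  (([:: 4; 0; 1; 2; 5; 3; 6; 7], 0), 2);
  (([:: 4; 0; 1; 2; 5; 3; 7; 6], 0), 0);
  (([:: 4; 0; 1; 2; 5; 6; 3; 7], 0), 1);
  (([:: 4; 0; 1; 2; 5; 6; 7; 3], 0), 0);
  (([:: 4; 0; 1; 5; 2; 3; 6; 7], 0), 2);
  (([:: 4; 0; 1; 5; 2; 3; 7; 6], 0), 0);
  (([:: 4; 0; 1; 5; 2; 6; 3; 7], 0), 1);
  (([:: 4; 0; 1; 5; 2; 6; 7; 3], 0), 0);
  (([:: 4; 0; 1; 5; 6; 2; 3; 7], 0), 1);
  (([:: 4; 0; 1; 5; 6; 2; 7; 3], 0), 0);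
  (([:: 4; 0; 1; 5; 6; 7; 2; 3], 0), 0);
  (([:: 4; 0; 5; 1; 2; 3; 6; 7], 0), 2);
  (([:: 4; 0; 5; 1; 2; 3; 7; 6], 0), 0);
  (([:: 4; 0; 5; 1; 2; 6; 3; 7], 0), 1);
  (([:: 4; 0; 5; 1; 2; 6; 7; 3], 0), 0);
  (([:: 4; 0; 5; 1; 6; 2; 3; 7], 0), 1);
  (([:: 4; 0; 5; 1; 6; 2; 7; 3], 0), 0);
  (([:: 4; 0; 5; 1; 6; 7; 2; 3], 0), 0);
  (([:: 4; 0; 5; 6; 1; 2; 3; 7], 0), 1);
  (([:: 4; 0; 5; 6; 1; 2; 7; 3], 0), 0);
  (([:: 4; 0; 5; 6; 1; 7; 2; 3], 0), 0);
  (([:: 4; 0; 5; 6; 7; 1; 2; 3], 0), 0);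
  (([:: 4; 5; 0; 1; 2; 3; 6; 7], 0), 2);
  (([:: 4; 5; 0; 1; 2; 3; 7; 6], 0), 0);
  (([:: 4; 5; 0; 1; 2; 6; 3; 7], 0), 1);
  (([:: 4; 5; 0; 1; 2; 6; 7; 3], 0), 0);
  (([:: 4; 5; 0; 1; 6; 2; 3; 7], 0), 1);
  (([:: 4; 5; 0; 1; 6; 2; 7; 3], 0), 0);
  (([:: 4; 5; 0; 1; 6; 7; 2; 3], 0), 0);
  (([:: 4; 5; 0; 6; 1; 2; 3; 7], 0), 1);
  (([:: 4; 5; 0; 6; 1; 2; 7; 3], 0), 0);
  (([:: 4; 5; 0; 6; 1; 7; 2; 3], 0), 0);
  (([:: 4; 5; 0; 6; 7; 1; 2; 3], 0), 0);
  (([:: 4; 5; 6; 0; 1; 2; 3; 7], 0), 1);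
  (([:: 4; 5; 6; 0; 1; 2; 7; 3], 0), 0);
  (([:: 4; 5; 6; 0; 1; 7; 2; 3], 0), 0);
  (([:: 4; 5; 6; 0; 7; 1; 2; 3], 0), 0);
  (([:: 4; 5; 6; 7; 0; 1; 2; 3], 0), 0);
  (([:: 0; 1; 2; 3; 4; 5; 6; 7], 8), 8)].

Definition W := [:: 3; 6; 11; 19; 33; 57; 97; 163; 269; 435; 690].
Definition w t := nth 0 W t.

Definition Xok := all (fun x => [&& perm_eq x.1.1 (iota 0 8), x.1.2 <= 8,
   take x.1.2 x.1.1 == iota 0 x.1.2, x.2 <= 8,
   drop (8 - x.2) x.1.1 == iota (8 - x.2) x.2 & (x.1.2 < 8) ==> (x.1.2 + x.2 < 8)]) X.
Lemma Xok_true : Xok. Proof. by vm_compute. Qed.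

Lemma Xuniq : uniq (map (fun x => x.1.1) X). Proof. by vm_compute. Qed.

Definition XRule i j k := all (fun x => SatB x.1.1 i j k true) X.

Definition XRtrip i j k := if i < j < k then
   let c := XRule i j k in all (fun x => SatB x.1.1 i j k c) X else true.
Definition XRok := all (fun i => all (fun j => all (fun k => XRtrip i j k) (iota 0 8)) (iota 0 8)) (iota 0 8).
Lemma XRok_true : XRok. Proof. by vm_compute. Qed.

Definition G tau := sumn [seq sumn [seq w (newt tau x.1.2 x.2 mm) | mm <- masks tau x.1.2] | x <- X].
Definition Gok := all (fun t => 544 * w t <= G t) (iota 0 M.+1).
Lemma Gok_true : Gok. Proof. by vm_compute. Qed.


Fixpoint Rule r m i j k : bool :=
  if m is m'.+1 then
    (if r + 8 * m' <= i then XRule (i - (r + 8 * m')) (j - (r + 8 * m')) (k - (r + 8 * m'))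
     else if k < r + 8 * m' then Rule r m' i j k else j < r + 8 * m')
  else true.

Definition build n (S : seq (seq nat * nat)) : seq (seq nat * nat) :=
  flatten [seq flatten [seq [seq (piece n p.1 p.2 x.1.1 x.1.2 mm, newt p.2 x.1.2 x.2 mm)
                             | mm <- masks p.2 x.1.2] | x <- X] | p <- S].

Fixpoint Sq r m := if m is m'.+1 then build (r + 8 * m') (Sq r m') else [:: (iota 0 r, 0)].

Lemma Xfacts x : x \in X -> [/\ perm_eq x.1.1 (iota 0 8), x.1.2 <= 8,
   take x.1.2 x.1.1 = iota 0 x.1.2, x.2 <= 8 &
   drop (8 - x.2) x.1.1 = iota (8 - x.2) x.2 /\ (x.1.2 < 8 -> x.1.2 + x.2 < 8)].
Proof.
move=> xX; have := allP Xok_true x xX.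
by case/and5P => h1 h2 /eqP h3 h4 /andP[/eqP h5 /implyP h6]; split.
Qed.

Lemma XRule_sat x i j k : x \in X -> i < j -> j < k -> k < 8 -> SatB x.1.1 i j k (XRule i j k).
Proof.
move=> xX ij jk k8.
have H : XRtrip i j k.
  have /allP/(_ i) := XRok_true; rewrite mem_iota => /(_ (ltac:(lia))) /allP/(_ j).
  rewrite mem_iota => /(_ (ltac:(lia))) /allP/(_ k).
  by rewrite mem_iota => /(_ (ltac:(lia))).
have H' : let c := XRule i j k in all (fun x => SatB x.1.1 i j k c) X.
  by move: H; rewrite /XRtrip ij jk => h; exact: h.
by move/allP: H' => /(_ x xX).
Qed.

Definition Inv N (p : seq nat * nat) (R : nat -> nat -> nat -> bool) :=
  [/\ perm_eq p.1 (iota 0 N), p.2 <= M, sufv N p.2 p.1 &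
      forall i j k, i < j -> j < k -> k < N -> SatB p.1 i j k (R i j k)].

Lemma Sq_inv r m (p : seq nat * nat) : p \in Sq r m -> Inv (r + 8 * m) p (Rule r m).
Proof.
elim: m p => [|m IH] p.
- rewrite /= inE => /eqP -> {p} /=; split => //.
  + by rewrite muln0 addn0.
  + by exists (iota 0 r); rewrite cats0.
  + move=> i j k ij jk kr; rewrite /SatB; apply/negP => /andP[h _].
    by move: h; rewrite /bef !index_iota_in ?subn0; lia.
- case/flatten_mapP => q qS /flatten_mapP[x xX /mapP[mm mmM ->]].
  have [qp qM [pre qe] qR] := IH q qS.
  have [xp xh xt xt8 [xd xht]] := Xfacts xX.
  set n := r + 8 * m in qp qe qR *.
  have eN : r + 8 * m.+1 = n + 8 by rewrite /n mulnS; lia.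
  have Hal : perm_eq (pre ++ iota (n - q.2) q.2) (iota 0 n) by rewrite -qe.
  have Htn : q.2 <= n.
    by have := perm_size qp; rewrite qe size_cat !size_iota => <-; rewrite leq_addl.
  rewrite eN qe pieceE //; split.
  + exact: perm_s'.
  + by rewrite /newt; case: ifP => _; [|case: ifP => _]; rewrite geq_minl.
  + exact: sufv_newt.
  + move=> i j k ij jk kn.
    apply: (sat_step Hal Htn xp xh xt mmM (R := Rule r m) (XR := XRule)) => //.
    * by move=> i' j' k' h1 h2 h3; rewrite -qe; apply: qR.
    * by move=> i' j' k' h1 h2 h3; apply: XRule_sat.
Qed.


Lemma uniq_flat (T U K V : eqType) (f : U -> V) (l : seq T) (F : T -> seq U)
    (key : V -> K) (kl : T -> K) :
  uniq (map kl l) -> (forall x, x \in l -> uniq (map f (F x))) ->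
  (forall x y, x \in l -> y \in F x -> key (f y) = kl x) ->
  uniq (map f (flatten (map F l))).
Proof.
elim: l => [|x l IH] //= /andP[kx ul] HF Hk.
rewrite map_cat cat_uniq HF ?mem_head //= IH //; last first.
- by move=> z y zl; apply: Hk; rewrite inE zl orbT.
- by move=> z zl; apply: HF; rewrite inE zl orbT.
rewrite andbT; apply/hasPn => v /mapP[y /flatten_mapP[z zl yz] ->].
apply/mapP => -[y' y'F e].
have e1 := Hk x y' (mem_head _ _) y'F.
have e2 : key (f y) = kl z by apply: Hk => //; rewrite inE zl orbT.
by move: kx; rewrite -e1 -e e2 (map_f kl zl).
Qed.

Lemma size_shuf m A B : size (shuf m A B) = size A + size B.
Proof. by rewrite (perm_size (perm_shuf m A B)) size_cat. Qed.

Lemma shuf_mask_inj (P : pred nat) pre A B post m1 m2 :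
  count negb m1 = size A -> count Datatypes.id m1 = size B ->
  count negb m2 = size A -> count Datatypes.id m2 = size B ->
  all (predC P) A -> all P B ->
  pre ++ shuf m1 A B ++ post = pre ++ shuf m2 A B ++ post -> m1 = m2.
Proof.
move=> a1 b1 a2 b2 hA hB /eqP; rewrite eqseq_cat // eqxx /= eqseq_cat ?size_shuf //.
case/andP => /eqP e _.
by rewrite -(map_shuf a1 b1 hA hB) -(map_shuf a2 b2 hA hB) e.
Qed.

Lemma all_lo n t : t <= n -> all (predC (fun z => n <= z)) (iota (n - t) t).
Proof. by move=> h; apply: all_iota => z /=; lia. Qed.
Lemma all_hi n h : all (fun z => n <= z) (iota n h).
Proof. by apply: all_iota => z /=; lia. Qed.

Lemma uniq_Sq r m : uniq (map fst (Sq r m)).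
Proof.
elim: m => [|m IH] //.
have -> : Sq r m.+1 = build (r + 8 * m) (Sq r m) by [].
set n := r + 8 * m.
apply: (uniq_flat (key := filter (fun z => z < n)) (kl := fst)) => //.
- move=> p pS.
  have [qp qM [pre qe] qR] := Sq_inv pS; rewrite -/n in qp qe.
  have Hal : perm_eq (pre ++ iota (n - p.2) p.2) (iota 0 n) by rewrite -qe.
  have Htn : p.2 <= n.
    by have := perm_size qp; rewrite qe size_cat !size_iota => <-; rewrite leq_addl.
  apply: (uniq_flat (key := fun s => map (subn^~ n) (filter (fun z => n <= z) s))
                    (kl := fun x => x.1.1)); first exact: Xuniq.
  + move=> x xX; have [xp xh xt xt8 [xd xht]] := Xfacts xX.
    rewrite -map_comp map_inj_in_uniq ?uniq_masks // => m1 m2 h1 h2 /=.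
    rewrite qe !pieceE //.
    have [c1 d1] := mem_masks h1; have [c2 d2] := mem_masks h2.
    apply: (shuf_mask_inj (P := fun z => n <= z)); rewrite ?size_iota //.
    * exact: all_lo.
    * exact: all_hi.
  + move=> x y xX /mapP[mm mmM ->] /=.
    have [xp xh xt xt8 [xd xht]] := Xfacts xX.
    rewrite qe pieceE // filter_hi // -map_comp.
    by rewrite (eq_map (g := Datatypes.id)) ?map_id // => z /=; rewrite addKn.
- move=> p y pS /flatten_mapP[x xX /mapP[mm mmM ->]] /=.
  have [qp qM [pre qe] qR] := Sq_inv pS; rewrite -/n in qp qe.
  have Hal : perm_eq (pre ++ iota (n - p.2) p.2) (iota 0 n) by rewrite -qe.
  have Htn : p.2 <= n.
    by have := perm_size qp; rewrite qe size_cat !size_iota => <-; rewrite leq_addl.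
  have [xp xh xt xt8 [xd xht]] := Xfacts xX.
  by rewrite qe pieceE // filter_lo.
Qed.

Definition Phi (S : seq (seq nat * nat)) := \sum_(p <- S) w p.2.

Lemma Phi_build n S : Phi (build n S) = \sum_(p <- S) G p.2.
Proof.
rewrite /Phi /build big_flatten big_map; apply: eq_bigr => p _.
rewrite big_flatten big_map /G sumnE big_map; apply: eq_bigr => x _.
by rewrite big_map sumnE big_map.
Qed.

Lemma G_ge t : t <= M -> 544 * w t <= G t.
Proof.
by move=> tM; apply: (allP Gok_true); rewrite mem_iota; lia.
Qed.

Lemma Phi_Sq r m : 3 * 544 ^ m <= Phi (Sq r m).
Proof.
elim: m => [|m IH]; first by rewrite /Phi big_cons big_nil.
have -> : Sq r m.+1 = build (r + 8 * m) (Sq r m) by [].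
rewrite Phi_build expnS mulnCA; apply: leq_trans (leq_mul (leqnn 544) IH) _.
rewrite /Phi big_distrr /= big_seq_cond [X in _ <= X]big_seq_cond.
apply: leq_sum => p /andP[pS _]; apply: G_ge.
by have [_ qM _ _] := Sq_inv pS.
Qed.

Lemma w_le t : w t <= 690.
Proof.
rewrite /w; case: (ltnP t 11) => ht; last by rewrite nth_default.
by move: t ht; do 11! case => //.
Qed.

Lemma Phi_size S : Phi S <= 690 * size S.
Proof.
elim: S => [|p S IH]; first by rewrite /Phi big_nil.
by rewrite /Phi big_cons /= mulnS leq_add // w_le.
Qed.


Definition gs n (s : seq nat) (x : 'I_n) : 'I_n := insubd x (index (val x) s).
Definition fs n s (x : 'I_n) : 'I_n := if injectiveb (@gs n s) then @gs n s x else x.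
Lemma fs_inj n s : injective (@fs n s).
Proof. rewrite /fs; case: (@injectiveP _ _ (@gs n s)) => [H|H] x y //=; exact: H. Qed.
Definition pofs n s : {perm 'I_n} := perm (@fs_inj n s).

Lemma pofsE n s (x : 'I_n) : perm_eq s (iota 0 n) -> val (pofs n s x) = index (val x) s.
Proof.
move=> hs.
have memx (y : 'I_n) : val y \in s by rewrite (perm_mem hs) mem_iota /=.
have lt (y : 'I_n) : index (val y) s < n.
  by rewrite -[X in _ < X](size_iota 0 n) -(perm_size hs) index_mem.
have inj : injectiveb (@gs n s).
  apply/injectiveP => a b /(congr1 val); rewrite /gs !val_insubd !lt => e.
  by apply: val_inj; apply: (index_inj 0 (memx a) (memx b) e).
by rewrite permE /fs inj /gs val_insubd lt.
Qed.

Lemma pofs_inj n s1 s2 : perm_eq s1 (iota 0 n) -> perm_eq s2 (iota 0 n) ->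
  pofs n s1 = pofs n s2 -> s1 = s2.
Proof.
move=> h1 h2 e.
have sz1 : size s1 = n by rewrite (perm_size h1) size_iota.
have sz2 : size s2 = n by rewrite (perm_size h2) size_iota.
apply: (@eq_from_nth _ 0); first by rewrite sz1 sz2.
move=> i hi.
have xs1 : nth 0 s1 i \in s1 by apply: mem_nth.
have xn : nth 0 s1 i < n by move: xs1; rewrite (perm_mem h1) mem_iota.
have xs2 : nth 0 s1 i \in s2 by rewrite (perm_mem h2) mem_iota.
have e1 := pofsE (Ordinal xn) h1; rewrite e (pofsE _ h2) /= in e1.
have e2 : index (nth 0 s1 i) s1 = i by rewrite index_uniq // (perm_uniq h1) iota_uniq.
rewrite -[in RHS]e2 -e1 nth_index //.
Qed.

Section Cond.
Variable n : nat.
Implicit Types (P : seq {perm 'I_n}) (x y z e u v : 'I_n).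

Lemma nab_sum P x y : x != y -> nabove P x y + nabove P y x = size P.
Proof.
move=> xy; elim: P => [|s P IH] //=.
rewrite /nabove /= -/(nabove P x y) -/(nabove P y x).
have : (s x < s y) + (s y < s x) = 1.
  case: ltngtP => // /val_inj /perm_inj e; by rewrite e eqxx in xy.
lia.
Qed.

Lemma count_imp (T : eqType) (a b : pred T) (s : seq T) :
  (forall t, t \in s -> a t -> b t) -> count a s <= count b s.
Proof.
elim: s => [|t s IH] //= H; apply: leq_add.
  by case ha: (a t) => //; rewrite (H t (mem_head _ _) ha).
by apply: IH => t' ts; apply: H; rewrite inE ts orbT.
Qed.

Lemma lt_neq (s : {perm 'I_n}) x y : x != y -> (s x < s y) = ~~ (s y < s x).
Proof.
move=> xy; case: ltngtP => // /val_inj /perm_inj e; by rewrite e eqxx in xy.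
Qed.

Lemma nocycle_first P e u v : e != u -> u != v -> v != e ->
  (forall s, s \in P -> ~~ ((s e < s u) && (s e < s v))) ->
  majority P e u -> majority P u v -> majority P v e -> False.
Proof.
move=> eu uv ve H m1 m2 m3.
have c : nabove P e u <= nabove P v u.
  apply: count_imp => s sP /= h; have := H s sP; rewrite h /= => h2.
  rewrite (lt_neq s (x:=e) (y:=v)) ?negbK in h2; last by rewrite eq_sym.
  exact: ltn_trans h2 h.
have s1 := nab_sum P eu; have s2 := nab_sum P uv.
move: m1 m2; rewrite /majority; lia.
Qed.

Lemma nocycle_last P e u v : e != u -> u != v -> v != e ->
  (forall s, s \in P -> ~~ ((s u < s e) && (s v < s e))) ->
  majority P e u -> majority P u v -> majority P v e -> False.
Proof.
move=> eu uv ve H m1 m2 m3.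
have c : nabove P v e <= nabove P v u.
  apply: count_imp => s sP /= h; have := H s sP; rewrite h andbT => h2.
  rewrite (lt_neq s (x:=u) (y:=e)) ?negbK in h2; last by rewrite eq_sym.
  exact: ltn_trans h h2.
have s1 := nab_sum P ve; have s2 := nab_sum P uv.
move: m3 m2; rewrite /majority; lia.
Qed.

Lemma tpos_count (s : {perm 'I_n}) a b c e :
  tpos s a b c e = 1 + count (fun w => s w < s e) [:: a; b; c].
Proof. by rewrite /tpos /= addn0 !addnA. Qed.

Lemma tpos_perm (s : {perm 'I_n}) a b c a' b' c' e :
  perm_eq [:: a; b; c] [:: a'; b'; c'] -> tpos s a b c e = tpos s a' b' c' e.
Proof. by rewrite !tpos_count => /seq.permP ->. Qed.

Lemma core P x y z p : x != y -> y != z -> z != x ->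
  majority P x y -> majority P y z -> majority P z x -> (p == 1) || (p == 3) ->
  (forall s, s \in P -> tpos s x y z x != p) -> False.
Proof.
move=> xy yz zx m1 m2 m3 /orP[] /eqP -> H.
- apply: (nocycle_first xy yz zx _ m1 m2 m3) => s sP.
  have := H s sP; rewrite /tpos ltnn.
  case: (ltngtP (s x) (s y)); case: (ltngtP (s x) (s z)) => //=; lia.
- apply: (nocycle_last xy yz zx _ m1 m2 m3) => s sP.
  have := H s sP; rewrite /tpos ltnn.
  by case: (s y < s x); case: (s z < s x).
Qed.

Lemma core2 P x y z e p : x != y -> y != z -> z != x ->
  majority P x y -> majority P y z -> majority P z x -> (p == 1) || (p == 3) ->
  e \in [:: x; y; z] ->
  (forall s, s \in P -> tpos s x y z e != p) -> False.
Proof.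
move=> xy yz zx m1 m2 m3 hp; rewrite !inE => /or3P[] /eqP -> H.
- exact: (core xy yz zx m1 m2 m3 hp H).
- apply: (core yz zx xy m2 m3 m1 hp) => s sP.
  have r1 : perm_eq [:: y; z; x] [:: x; y; z] by rewrite -[[:: y; z; x]]/(rot 1 [:: x; y; z]) perm_rot.
  by rewrite (tpos_perm _ _ r1) H.
- apply: (core zx xy yz m3 m1 m2 hp) => s sP.
  have r2 : perm_eq [:: z; x; y] [:: x; y; z] by rewrite -[[:: z; x; y]]/(rot 2 [:: x; y; z]) perm_rot.
  by rewrite (tpos_perm _ _ r2) H.
Qed.

Lemma pp_condorcet (D : domain n) : peak_pit D -> condorcet D.
Proof.
move=> pp P oddP allD x y z hxy hyz.
case hxz: (majority P x z) => //; exfalso.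
have xy : x != y by apply/eqP => e; move: hxy; rewrite e /majority ltnn.
have yz : y != z by apply/eqP => e; move: hyz; rewrite e /majority ltnn.
have zx : z != x.
  apply/eqP => e; move: hxy hyz; rewrite e /majority => h1 h2.
  by move: (ltn_trans h1 h2); rewrite ltnn.
have m3 : majority P z x.
  have s := nab_sum P (x:=x) (y:=z); rewrite eq_sym in s; have {}s := s zx.
  have ne : nabove P x z != nabove P z x.
    apply/eqP => e; move: oddP; rewrite -s e addnn odd_double.
    by [].
  move: hxz ne; rewrite /majority; lia.
set L := sort (fun a b : 'I_n => a <= b) [:: x; y; z].
have pL : perm_eq L [:: x; y; z] by rewrite /L perm_sort.
have sL : sorted (fun a b : 'I_n => a <= b) L by apply: sort_sorted => a b; apply: leq_total.
have uL : uniq L by rewrite (perm_uniq pL) /= !inE negb_or xy (eq_sym x z) zx yz.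
move: pL sL uL; case: L => [|a [|b [|c [|d L]]]] // pL sL uL; try by move: (perm_size pL).
move: sL uL => /= /and3P[ab bc _] /and3P[]; rewrite !inE negb_or => /andP[nab nac] nbc _.
have ab' : a < b by rewrite ltn_neqAle ab andbT; apply: contra nab => /eqP e; apply/eqP/val_inj.
have bc' : b < c by rewrite ltn_neqAle bc andbT; apply: contra nbc => /eqP e; apply/eqP/val_inj.
have [k [k13 hk]] := pp a b c ab' bc'.
have ek : tnth3 a b c k \in [:: x; y; z].
  rewrite -(perm_mem pL) /tnth3; case: ifP => _; first by rewrite mem_head.
  by case: ifP => _; rewrite !inE eqxx ?orbT.
have ne (p : nat) : never D a b c k p -> forall s, s \in P -> tpos s x y z (tnth3 a b c k) != p.
  move=> nv s sP; rewrite -(tpos_perm _ _ pL); apply/eqP.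
  by apply: nv; apply: (allP allD).
case: hk => [nv|nv].
- exact: (core2 xy yz zx hxy hyz m3 (p := 3) _ ek (ne _ nv)).
- exact: (core2 xy yz zx hxy hyz m3 (p := 1) _ ek (ne _ nv)).
Qed.

End Cond.


Definition Lr n := map fst (Sq (n %% 8) (n %/ 8)).
Definition Dn n : {set {perm 'I_n}} := [set s in map (pofs n) (Lr n)].

Lemma eqn8 n : n %% 8 + 8 * (n %/ 8) = n.
Proof. by rewrite mulnC addnC -divn_eq. Qed.

Lemma Lr_inv n s : s \in Lr n -> perm_eq s (iota 0 n) /\
  forall i j k, i < j -> j < k -> k < n -> SatB s i j k (Rule (n %% 8) (n %/ 8) i j k).
Proof.
case/mapP => p pS ->; have [h1 _ _ h4] := Sq_inv pS.
by rewrite eqn8 in h1 h4; split.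
Qed.

Lemma card_Dn n : #|Dn n| = size (Sq (n %% 8) (n %/ 8)).
Proof.
rewrite cardsE; have /card_uniqP -> : uniq (map (pofs n) (Lr n)).
  rewrite map_inj_in_uniq ?uniq_Sq // => s1 s2 h1 h2.
  by apply: pofs_inj; [case: (Lr_inv h1) | case: (Lr_inv h2)].
by rewrite !size_map.
Qed.

Lemma lt_pofs n s (x y : 'I_n) : perm_eq s (iota 0 n) -> (pofs n s x < pofs n s y) = bef s x y.
Proof. by move=> h; rewrite /bef -!(pofsE _ h). Qed.

Lemma bef_irr s x : bef s x x = false.
Proof. by rewrite /bef ltnn. Qed.

Lemma peak_Dn n : peak_pit (Dn n).
Proof.
move=> a b c ab bc.
have Hs s : s \in Lr n -> SatB s a b c (Rule (n %% 8) (n %/ 8) a b c).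
  by move=> sL; case: (Lr_inv sL) => _ H; apply: H.
case hR: (Rule (n %% 8) (n %/ 8) a b c).
- exists 1; split => //; left => s; rewrite inE => /mapP[t tL ->].
  have [tp _] := Lr_inv tL; have := Hs t tL; rewrite hR /SatB /tpos /tnth3 /=.
  rewrite !lt_pofs // bef_irr.
  by case: (bef t b a); case: (bef t c a).
- exists 3; split => //; right => s; rewrite inE => /mapP[t tL ->].
  have [tp _] := Lr_inv tL; have := Hs t tL; rewrite hR /SatB /tpos /tnth3 /=.
  rewrite !lt_pofs // bef_irr.
  by case: (bef t a c); case: (bef t b c).
Qed.

Lemma h_ge n : size (Sq (n %% 8) (n %/ 8)) <= h_max n.
Proof.
rewrite -card_Dn /h_max.
apply: (leq_bigmax_cond (P := fun D : {set {perm 'I_n}} => `[< condorcet D /\ peak_pit D >])).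
apply/asboolP; split; [apply: pp_condorcet|]; exact: peak_Dn.
Qed.

Lemma h_le_f n : h_max n <= f_max n.
Proof.
rewrite /h_max; apply/bigmax_leqP => D /asboolP [cD _].
by apply: (leq_bigmax_cond (P := fun D : {set {perm 'I_n}} => `[< condorcet D >])); apply/asboolP.
Qed.

Lemma h_bound n : 3 * 544 ^ (n %/ 8) <= 690 * h_max n.
Proof.
apply: leq_trans (Phi_Sq _ _) _; apply: leq_trans (Phi_size _) _.
exact: leq_mul (leqnn 690) (h_ge n).
Qed.


Lemma INR544 : INR 544 = 544%R. Proof. by rewrite INR_IZR_INZ. Qed.
Lemma INR690 : INR 690 = 690%R. Proof. by rewrite INR_IZR_INZ. Qed.
Lemma INR3 : INR 3 = 3%R. Proof. by rewrite INR_IZR_INZ. Qed.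

Lemma INR_expn m k : INR (expn m k) = (INR m ^ k)%R.
Proof. elim: k => [|k IH]; first by []. by rewrite expnS -multE mult_INR IH. Qed.

Lemma INR_hbound n : (3 / 690 * 544 ^ (n %/ 8) <= INR (h_max n))%R.
Proof.
have /leP/le_INR := h_bound n.
rewrite -!multE !mult_INR INR_expn INR544 INR690 INR3 => H.
lra.
Qed.

Lemma pow_split (x : R) n : (1 <= x)%R -> (x ^ n <= (x ^ 8) ^ (n %/ 8) * x ^ 7)%R.
Proof.
move=> x1.
have e : n = (n %/ 8 * 8 + n %% 8)%N by apply: divn_eq.
have r7 : (n %% 8 <= 7)%N by rewrite -ltnS ltn_pmod.
rewrite {1}e -plusE -multE pow_add Nat.mul_comm pow_mult.
apply: Rmult_le_compat_l; first by apply: pow_le; apply: pow_le; lra.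
by apply: Rle_pow => //; apply/leP.
Qed.

Lemma beta_facts : (1 <= sqrt (2 + 2 * sqrt 2))%R /\ (sqrt (2 + 2 * sqrt 2) ^ 8 <= 544)%R.
Proof.
set s := sqrt 2.
have s0 : (0 <= s)%R by apply: sqrt_pos.
have s2 : (s * s = 2)%R by apply: sqrt_sqrt; lra.
have s17 : (s <= 17 / 12)%R by nra.
set b := sqrt (2 + 2 * s).
have b0 : (0 <= b)%R by apply: sqrt_pos.
have b2 : (b * b = 2 + 2 * s)%R by apply: sqrt_sqrt; lra.
split; first by nra.
have -> : (b ^ 8 = (b * b) * (b * b) * ((b * b) * (b * b)))%R by simpl; ring.
rewrite b2; nra.
Qed.

Lemma x8 : ((21973 / 10000) ^ 8 < 544)%R.
Proof. simpl; lra. Qed.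

Lemma bern (y : R) q : (0 <= y)%R -> (1 + INR q * y <= (1 + y) ^ q)%R.
Proof.
move=> y0; elim: q => [|q IH]; first by rewrite /=; lra.
rewrite S_INR; change ((1 + y) ^ q.+1)%R with ((1 + y) * (1 + y) ^ q)%R.
have : (0 <= INR q * y)%R by apply: Rmult_le_pos => //; apply: pos_INR.
nra.
Qed.

Theorem mainTheorem18 :
  (exists C : R, (0 < C)%R /\
     exists N : nat, forall n : nat, (N <= n)%N ->
       (h_max n <= f_max n)%N /\
       (C * (sqrt (2 + 2 * sqrt 2)) ^ n <= INR (h_max n))%R)
  /\
  (exists N : nat, forall n : nat, (N <= n)%N ->
       ((21973 / 10000) ^ n < INR (h_max n))%R).
Proof.
have [b1 b8] := beta_facts.
set b := sqrt (2 + 2 * sqrt 2) in b1 b8 *.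
split.
- have bp : (0 < b ^ 7)%R by apply: pow_lt; lra.
  exists (3 / 690 / b ^ 7)%R; split.
    by apply: Rdiv_lt_0_compat => //; lra.
  exists 0%N => n _; split; first exact: h_le_f.
  apply: Rle_trans (INR_hbound n).
  set q := (n %/ 8)%N.
  have h1 : (b ^ n <= (b ^ 8) ^ q * b ^ 7)%R by apply: pow_split.
  have h2 : ((b ^ 8) ^ q <= 544 ^ q)%R.
    by apply: pow_incr; split => //; apply: pow_le; lra.
  have Cp : (0 <= 3 / 690 / b ^ 7)%R.
    by apply: Rlt_le; apply: Rdiv_lt_0_compat => //; lra.
  apply: Rle_trans (Rmult_le_compat_l _ _ _ Cp h1) _.
  have e : (3 / 690 / b ^ 7 * ((b ^ 8) ^ q * b ^ 7) = 3 / 690 * (b ^ 8) ^ q)%R.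
    by field; lra.
  rewrite e; apply: Rmult_le_compat_l => //; lra.
- set x := (21973 / 10000)%R.
  have x1 : (1 <= x)%R by rewrite /x; lra.
  have xa := x8; rewrite -/x in xa.
  set a := (x ^ 8)%R in xa *.
  have a0 : (0 < a)%R by apply: pow_lt; lra.
  set rho := (544 / a)%R.
  have rho1 : (1 < rho)%R.
    by rewrite /rho; apply: (Rmult_lt_reg_r a) => //; field_simplify; lra.
  have x7 : (0 < x ^ 7)%R by apply: pow_lt; lra.
  set K := (690 * x ^ 7 / (3 * (rho - 1)))%R.
  have [Q HQ] := INR_unbounded K.
  exists (8 * Q)%N => n hn.
  set q := (n %/ 8)%N.
  have qQ : (Q <= q)%N by rewrite /q -(mulKn Q (isT : 0 < 8)%N) leq_div2r.
  have qQ' : (INR Q <= INR q)%R by apply: le_INR; apply/leP.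
  have hx : (x ^ n <= a ^ q * x ^ 7)%R by apply: pow_split.
  have e544 : (544 ^ q = a ^ q * rho ^ q)%R.
    have ear : (a * rho = 544)%R by rewrite /rho; field; lra.
    by rewrite -Rpow_mult_distr ear.
  have hb := bern q (ltac:(lra) : (0 <= rho - 1)%R).
  have e1 : (1 + (rho - 1) = rho)%R by ring.
  rewrite e1 in hb.
  have hK : (K * (rho - 1) = 690 * x ^ 7 / 3)%R by rewrite /K; field; lra.
  have hq : (x ^ 7 < 3 / 690 * rho ^ q)%R.
    have : (K * (rho - 1) < INR q * (rho - 1))%R.
      by apply: Rmult_lt_compat_r; lra.
    rewrite hK; lra.
  have aq : (0 < a ^ q)%R by apply: pow_lt.
  apply: Rle_lt_trans hx _; apply: Rlt_le_trans (INR_hbound n).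
  rewrite -/q e544.
  have : (a ^ q * x ^ 7 < a ^ q * (3 / 690 * rho ^ q))%R by apply: Rmult_lt_compat_l.
  lra.
Qed.
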